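(* Let $n\geq 5$, let $B_n$ be the braid group on $n$ strands, and let $G$ be a finite group. If $f\colon B_n\rightarrow G$ is a homomorphism that is not cyclic, then \[ |G| \geq 2^{\lfloor n/2\rfloor-1}\left(\lfloor n/2\rfloor\right)!. \]
   Context: The abelianization of $B_n$ is infinite cyclic, $B_n/B_n'\cong\mathbb{Z}$, where $B_n'$ is the commutator subgroup. A homomorphism $B_n\rightarrow G$ is called cyclic if it factors through the abelianization map $B_n\rightarrow \mathbb{Z}$ (equivalently, if its kernel contains $B_n'$). *)

(* Defs.v *)
From mathcomp Require Import all_boot all_fingroup.
Set Implicit Arguments. Unset Strict Implicit. Unset Printing Implicit Defensive.
Local Open Scope group_scope.

(* The braid group B_n has the Artin presentation with generators
   sigma_1, ..., sigma_{n-1} (indexed here by 0, ..., n-2) and relations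
     sigma_i sigma_{i+1} sigma_i = sigma_{i+1} sigma_i sigma_{i+1},
     sigma_i sigma_j = sigma_j sigma_i   for |i - j| >= 2.
   By the universal property of this presentation, a homomorphism
   f : B_n -> G is exactly the data s i := f(sigma_i) (i < n-1) of elements
   of G satisfying these relations. *)
Definition braid_hom (gT : finGroupType) (n : nat) (G : {set gT})
    (s : nat -> gT) : Prop :=
  [/\ (forall i, i.+1 < n -> s i \in G),
      (forall i, i.+2 < n -> s i * s i.+1 * s i = s i.+1 * s i * s i.+1)
    & (forall i j, i.+1 < j -> j.+1 < n -> commute (s i) (s j))].

(* The abelianization map B_n -> Z sends every sigma_i to 1.  A homomorphism
   f factors through it, f = h o ab with h : Z -> G a homomorphism, iff
   h(1) = x is a common value of all f(sigma_i). *)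
Definition braid_hom_cyclic (gT : finGroupType) (n : nat) (s : nat -> gT)
    : Prop :=
  exists x : gT, forall i, i.+1 < n -> s i = x.

(* Main.v *)
Require Import Defs.
From mathcomp Require Import all_boot all_fingroup.
From mathcomp Require Import zify.
Set Implicit Arguments. Unset Strict Implicit. Unset Printing Implicit Defensive.

Lemma perm_gen k (R : {group {perm 'I_k.+1}}) :
  (forall a b : 'I_k.+1, val b = a.+1 -> tperm a b \in R) -> forall p, p \in R.
Proof.
move=> H.
have tp: forall d (a b : 'I_k.+1), val b = a + d.+1 -> tperm a b \in R.
  elim=> [|d IH] a b hb; first by apply: H; rewrite hb addn1.
  have cb: a + d.+1 < k.+1 by have := ltn_ord b; rewrite hb; lia.
  pose c : 'I_k.+1 := Ordinal cb.
  have -> : tperm a b = ((tperm a c) ^ (tperm c b))%g.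
    rewrite tpermJ tpermL tpermD //; apply/negP => /eqP/(congr1 val); rewrite /= ?hb; lia.
  by apply: groupJ; [exact: IH | apply: H; rewrite hb /=; lia].
have tp2: forall a b, tperm a b \in R.
  move=> a b; case: (ltngtP a b) => h.
  - by apply: (tp (b - a.+1)) => /=; lia.
  - by rewrite tpermC; apply: (tp (a - b.+1)) => /=; lia.
  - have -> : a = b by apply: val_inj.
    by rewrite tperm1 group1.
move=> p; case: (prod_tpermP p) => ts -> _; apply: group_prod => t _; exact: tp2.
Qed.

Lemma count_lemma (gT : finGroupType) (G : {group gT}) K (x : 'I_K.+1 -> gT)
    (gp : {perm 'I_K.+1} -> gT) :
  (forall i, x i \in G) -> (forall i j, commute (x i) (x j)) -> injective x ->
  (forall p, gp p \in G) -> (forall p j, (gp p * x j = x (p j) * gp p)%g) ->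
  2 ^ K * K.+1`! <= #|G|.
Proof.
move=> xG xc xinj gpG gpP.
pose A j := <<[set x i | i : 'I_K.+1 & i < j]>>%G.
have AG j : A j \subset G.
  by rewrite gen_subG; apply/subsetP => y /imsetP [i _ ->]; exact: xG.
have AC j y : (forall i : 'I_K.+1, i < j -> commute (x i) y) -> A j \subset 'C[y]%g.
  move=> h; rewrite gen_subG; apply/subsetP => z /imsetP[i hi ->]; apply/cent1P.
  by apply: h; move: hi; rewrite inE.
have Achain: forall j, j <= K -> 2^j <= #|A j|.
  elim=> [|j IH] hj; first by rewrite expn0 cardG_gt0.
  have sub: A j \subset A j.+1.
    apply: genS; apply/subsetP => y /imsetP[i hi ->]; apply: imset_f.
    by move: hi; rewrite !inE => /ltnW.
  have jK : j < K.+1 by lia.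
  have notin: x (inord j) \notin A j.
    apply/negP => hin.
    pose t := tperm (inord j : 'I_K.+1) ord_max.
    have: A j \subset 'C[gp t]%g.
      apply: AC => i hi; rewrite /commute gpP /t tpermD //.
        by apply/negP => /eqP/(congr1 val); rewrite /= inordK //; lia.
      by apply/negP => /eqP/(congr1 val); rewrite /=; lia.
    move/subsetP/(_ _ hin)/cent1P => c.
    have := gpP t (inord j); rewrite /t tpermL -c => /mulIg /xinj /(congr1 val).
    by rewrite /= inordK //; lia.
  have := Lagrange sub.
  have : 1 < #|A j.+1 : A j|%g.
    rewrite indexg_gt1; apply/negP => s'; apply/negP: notin; apply/negPn.
    apply: (subsetP s'); apply: mem_gen; apply: imset_f; rewrite inE inordK //.
  move: (IH (ltnW hj)); rewrite expnS; nia.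
pose f := fun (ap : gT * {perm 'I_K.+1}) => (ap.1 * gp ap.2)%g.
have inj: {in setX (A K) [set: {perm 'I_K.+1}] &, injective f}.
  move=> [a p] [b q] /setXP[ha _] /setXP[hb _]; rewrite /f /= => e.
  have cA c (hc : c \in A K) j : commute c (x j).
    apply/cent1P; apply: (subsetP (AC K (x j) _)) => // i _; exact: xc.
  have pq: p = q.
    apply/permP => j; apply: xinj.
    have h1: (a * gp p * x j = x (p j) * (a * gp p))%g.
      by rewrite -mulgA gpP mulgA (cA a ha) mulgA.
    have h2: (b * gp q * x j = x (q j) * (b * gp q))%g.
      by rewrite -mulgA gpP mulgA (cA b hb) mulgA.
    by move: h1; rewrite e h2 => /mulIg ->.
  by subst q; move/mulIg: e => ->.
have sub: [set f ap | ap in setX (A K) [set: {perm 'I_K.+1}]] \subset G.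
  apply/subsetP => y /imsetP[[a p] /setXP[ha _] ->].
  by rewrite /f groupM // (subsetP (AG K)).
have := subset_leq_card sub; rewrite card_in_imset // cardsX cardsT card_Sn.
by apply: leq_trans; rewrite leq_mul2r Achain ?orbT.
Qed.

Local Open Scope group_scope.

Lemma braid_swap (gT : finGroupType) (a b c : gT) :
  a * b * a = b * a * b -> b * c * b = c * b * c -> commute a c ->
  (b * c * a * b) * a = c * (b * c * a * b) /\
  (b * c * a * b) * c = a * (b * c * a * b).
Proof.
move=> r12 r23 ac.
have r12' : a * (b * a) = b * (a * b) by rewrite !mulgA.
have r12X : forall X, a * (b * (a * X)) = b * (a * (b * X)).
  by move=> X; rewrite !mulgA r12.
have r23' : c * (b * c) = b * (c * b) by rewrite !mulgA r23.
have r23X : forall X, b * (c * (b * X)) = c * (b * (c * X)).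
  by move=> X; rewrite !mulgA r23.
have caX : forall Y, c * (a * Y) = a * (c * Y).
  by move=> Y; rewrite !mulgA ac.
split.
  by rewrite -!mulgA r12' r23X.
rewrite -!mulgA [in LHS]caX [in RHS]caX r23' [in RHS]r12X //.
Qed.

Lemma braid_eq (gT : finGroupType) (a c : gT) :
  commute a c -> a * c * a = c * a * c -> a = c.
Proof.
move=> ac h.
have h1 : a * c * a = a * a * c by rewrite -mulgA -ac mulgA.
have h2 : c * a * c = a * c * c by rewrite -ac.
by move: h; rewrite h1 h2 => /mulIg /mulgI.
Qed.

Local Close Scope group_scope.

Theorem theorem1p1 (gT : finGroupType) (G : {group gT}) (n : nat)
    (s : nat -> gT) :
  5 <= n -> braid_hom n G s -> ~ braid_hom_cyclic n s ->
  2 ^ (n./2 - 1) * (n./2)`! <= #|G|.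
Proof.
move=> n5 [sG sbr scomm] ncyc.
have hodd := odd_double_half n.
have ho : odd n <= 1 by case: odd.
rewrite -muln2 in hodd.
have [K hK] : exists K, n./2 = K.+1 by exists (n./2).-1; lia.
rewrite hK in hodd *.
have K1 : 1 <= K by lia.
rewrite subn1 /=.
pose x (i : 'I_K.+1) := s (2 * i).
have xG i : x i \in G by apply: sG; have := ltn_ord i; lia.
have xc i j : commute (x i) (x j).
  have := ltn_ord i; have := ltn_ord j.
  case: (ltngtP i j) => h hj hi.
  - by apply: scomm; lia.
  - by apply: commute_sym; apply: scomm; lia.
  - have -> : i = j by apply: val_inj.
    exact: commute_refl.
have s02 : s 0 <> s 2.
  move=> e.
  have e23 : s 2 = s 3.
    apply: braid_eq; last by apply: sbr; lia.
    by rewrite -e; apply: scomm; lia.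
  have e01 : s 0 = s 1.
    apply: braid_eq; last by apply: sbr; lia.
    by rewrite e e23; apply: commute_sym; apply: scomm; lia.
  apply: ncyc; exists (s 0).
  elim/ltn_ind => i IH hi.
  case: i IH hi => [|[|j]] IH hi //.
  have ej : s j.+1 = s j.+2.
    apply: braid_eq; last by apply: sbr; lia.
    rewrite (IH j.+1 (ltnSn _)); last by lia.
    rewrite -(IH j); [ | lia | lia].
    by apply: scomm; lia.
  by rewrite -ej IH //; lia.
pose R := [set p : {perm 'I_K.+1} |
            [exists g in G, [forall j, (g * x j == x (p j) * g)%g]]].
have Rgs : group_set R.
  apply/group_setP; split.
    rewrite inE; apply/existsP; exists 1%g; rewrite group1 /=; apply/forallP => j.
    by rewrite perm1 mul1g mulg1.
  move=> p q; rewrite !inE => /existsP[g /andP[gG /forallP gP]].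
  move=> /existsP[h /andP[hG /forallP hP]].
  apply/existsP; exists (h * g)%g; rewrite groupM //=; apply/forallP => j.
  by rewrite permM -mulgA (eqP (gP j)) mulgA (eqP (hP (p j))) -mulgA.
pose RG := Group Rgs.
have adj : forall a b : 'I_K.+1, val b = a.+1 -> tperm a b \in RG.
  move=> a b /= hb; have hbK := ltn_ord b.
  set i := 2 * a.
  have xa : x a = s i by [].
  have xb : x b = s i.+2 by rewrite /x /i hb; congr s; lia.
  have [g1 g3] := braid_swap (sbr i ltac:(lia)) (sbr i.+1 ltac:(lia))
                    (scomm i i.+2 ltac:(lia) ltac:(lia)).
  have sGi : forall m, m <= i.+2 -> s m \in G by move=> m hm; apply: sG; lia.
  rewrite /= inE; apply/existsP; exists (s i.+1 * s i.+2 * s i * s i.+1)%g.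
  rewrite !groupM ?sGi //=; [ | lia..]; apply/forallP => j.
  case: (eqVneq j a) => [->|ja]; first by rewrite tpermL xa xb g1.
  case: (eqVneq j b) => [->|jb]; first by rewrite tpermR xa xb g3.
  rewrite tpermD 1?eq_sym //.
  have ja' : (j : nat) <> a by move=> h; move/eqP: ja; apply; apply: val_inj.
  have jb' : (j : nat) <> b by move=> h; move/eqP: jb; apply; apply: val_inj.
  have cj : forall m, i <= m <= i.+2 -> commute (x j) (s m).
    move=> m hm; have := ltn_ord j; case: (ltngtP j a) => hja hjK.
    - by apply: scomm; lia.
    - by apply: commute_sym; apply: scomm; lia.
    - by exfalso; apply: ja'.
  have cg : commute (x j) (s i.+1 * s i.+2 * s i * s i.+1)%g.
    by repeat apply: commuteM; apply: cj; lia.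
  by apply/eqP; rewrite cg.
have allR : forall p, p \in RG := perm_gen adj.
pose gp (p : {perm 'I_K.+1}) := odflt 1%g [pick g in G | [forall j, (g * x j == x (p j) * g)%g]].
have gpS : forall p : {perm 'I_K.+1}, gp p \in G /\ forall j, (gp p * x j = x (p j) * gp p)%g.
  move=> p; rewrite /gp; case: pickP => [g /andP[gG /forallP h]|none] /=.
    by split=> // j; apply/eqP.
  have := allR p; rewrite /= inE => /existsP[g /andP[gG gh]].
  by have := none g; rewrite gG gh.
have xinj : injective x.
  move=> u v e; apply/eqP; apply/negPn/negP => uv.
  pose one : 'I_K.+1 := inord 1.
  pose p := (tperm u ord0 * tperm (tperm u ord0 v) one)%g.
  have [_ gpP] := gpS p.
  have pu : p u = ord0.
    rewrite permM tpermL tpermD //.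
      by rewrite -[X in _ != X](tpermL u ord0) (inj_eq perm_inj) eq_sym.
    by apply/negP => /eqP/(congr1 val); rewrite /= inordK; lia.
  have pv : p v = one by rewrite permM tpermL.
  have := gpP u; rewrite e gpP pv pu => /mulIg.
  rewrite /x /one /= inordK; last by lia.
  by move=> h; apply: s02; rewrite -h.
exact: (count_lemma xG xc xinj (fun p => (gpS p).1) (fun p => (gpS p).2)).
Qed.
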